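(* Let $R\subseteq\mathbb{R}^d$ and let $y$ lie in the relative interior of $\operatorname{conv}R$. Then for every $x\in R$ there exists an affinely independent set $S\subseteq R$ with at most $d+1$ points such that $x\in S$ and $y$ lies in the relative interior of $\operatorname{conv} S$.
   Context: $\operatorname{conv}$ denotes convex hull; relative interior is the interior relative to the affine hull. *)

(* Defs.v *)
(* Points of R^d are row vectors 'rV[K]_d over an arbitrary
   real (ordered) field K; the paper's case is K = the real numbers. *)
From HB Require Import structures.
From mathcomp Require Import all_boot all_order all_algebra.
Set Implicit Arguments. Unset Strict Implicit. Unset Printing Implicit Defensive.
Import Order.TTheory GRing.Theory Num.Theory.
Local Open Scope ring_scope.

Definition conv (K : realFieldType) (d : nat) (A : 'rV[K]_d -> Prop)
  : 'rV[K]_d -> Prop :=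
  fun y => exists (n : nat) (x : 'I_n -> 'rV[K]_d) (l : 'I_n -> K),
    (forall i, A (x i)) /\ (forall i, 0 <= l i) /\ (\sum_i l i = 1) /\
    y = \sum_i l i *: x i.

Definition aff (K : realFieldType) (d : nat) (A : 'rV[K]_d -> Prop)
  : 'rV[K]_d -> Prop :=
  fun y => exists (n : nat) (x : 'I_n -> 'rV[K]_d) (l : 'I_n -> K),
    (forall i, A (x i)) /\ (\sum_i l i = 1) /\ y = \sum_i l i *: x i.

(* Sup norm on 'rV_d (equivalent to the Euclidean norm for topology). *)
Definition supnorm (K : realFieldType) (d : nat) (v : 'rV[K]_d) : K :=
  \big[Num.max/0]_(i < d) `|v 0 i|.

Definition relint (K : realFieldType) (d : nat) (C : 'rV[K]_d -> Prop)
  : 'rV[K]_d -> Prop :=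
  fun y => C y /\ exists eps : K, 0 < eps /\
    forall z, aff C z -> supnorm (z - y) < eps -> C z.

Definition aff_indep (K : realFieldType) (d : nat) (s : seq 'rV[K]_d) : Prop :=
  forall c : 'I_(size s) -> K,
    \sum_i c i = 0 -> \sum_i c i *: s`_i = 0 -> forall i, c i = 0.

(* Main.v *)
Require Import Defs.
From HB Require Import structures.
From mathcomp Require Import all_boot all_order all_algebra.
From Stdlib Require Import Classical.
Set Implicit Arguments. Unset Strict Implicit. Unset Printing Implicit Defensive.
Import Order.TTheory GRing.Theory Num.Theory.
Local Open Scope ring_scope.

Section S.
Variable K : realFieldType.
Variable d : nat.
Notation V := 'rV[K]_d.

Definition afind n (f : 'I_n -> V) := forall c : 'I_n -> K,
  \sum_i c i = 0 -> \sum_i c i *: f i = 0 -> forall i, c i = 0.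

Definition hypf (P : V -> Prop) (y : V) n (f : 'I_n.+1 -> V) (w : 'I_n.+1 -> K) :=
  [/\ (forall i, P (f i)), (forall i, 0 <= w i), 0 < w ord0, \sum_i w i = 1 &
      y = \sum_i w i *: f i].

Definition concl (P : V -> Prop) (y x : V) :=
  exists m (g : 'I_m.+1 -> V) (mu : 'I_m.+1 -> K),
   [/\ (forall i, P (g i)), g ord0 = x, afind g, (forall i, 0 < mu i) &
       (\sum_i mu i = 1 /\ y = \sum_i mu i *: g i)].

Lemma remove_pt P y n (IH : forall (f : 'I_n.+1 -> V) w, hypf P y f w -> concl P y (f ord0))
  (f : 'I_n.+2 -> V) w : hypf P y f w ->
  forall j, j != ord0 -> w j = 0 -> concl P y (f ord0).
Proof.
move=> [Pf wp w0 ws yE] j j0 wj.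
have lj : lift j ord0 = ord0.
  apply: val_inj => /=; rewrite /bump leqn0.
  by move: j0; rewrite -(inj_eq val_inj) /= => /negbTE ->.
rewrite -lj; apply: (IH (fun i => f (lift j i)) (fun i => w (lift j i))).
split => //; first by rewrite lj.
  by move: ws; rewrite (bigD1_ord j) //= wj add0r.
by move: yE; rewrite (bigD1_ord j) //= wj scale0r add0r.
Qed.

Lemma pos_exists n (c : 'I_n -> K) i : \sum_k c k = 0 -> c i != 0 -> exists j, 0 < c j.
Proof.
move=> c0 ci; apply: NNPP => H; move/negP: ci; apply.
have H' : forall k, 0 <= - c k.
  by move=> k; rewrite oppr_ge0 leNgt; apply/negP => ck; apply: H; exists k.
have := @psumr_eq0P _ _ xpredT (fun k => - c k) (fun k _ => H' k).
rewrite sumrN c0 oppr0 => /(_ erefl i isT) /eqP; rewrite oppr_eq0.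
done.
Qed.


Lemma elim_pts P y n : forall (f : 'I_n.+1 -> V) w, hypf P y f w -> concl P y (f ord0).
Proof.
elim: n => [|n IH] f w.
  move=> [Pf wp w0 ws yE]; exists 0%N, f, w; split => //.
  - move=> c; rewrite big_ord1 => c0 _ i; by rewrite (ord1 i).
  - move=> i; by rewrite (ord1 i).
move=> H; have rem := remove_pt IH.
case: (boolP [exists j, (j != ord0) && (w j == 0)]).
  by case/existsP => j /andP [j0 /eqP wj]; apply: (rem f w H j j0 wj).
move=> /existsPn nz.
case: H => [Pf wp w0 ws yE].
have wpos : forall i, 0 < w i.
  move=> i; case: (eqVneq i ord0) => [->//|i0].
  by rewrite lt_def wp andbT; move: (nz i); rewrite i0 /=.
case: (classic (afind f)) => [af|naf].
  by exists n.+1, f, w; split.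
have [c [c0 [cf [i ci]]]] : exists c : 'I_n.+2 -> K, \sum_k c k = 0 /\
   \sum_k c k *: f k = 0 /\ exists i, c i != 0.
  apply: NNPP => H; apply: naf => c c0 cf i; apply: NNPP => ci.
  by apply: H; exists c; split; [|split; [|exists i; apply/eqP]].
have [c' [c'0 [c'f [c'neg [j cj]]]]] : exists c' : 'I_n.+2 -> K, \sum_k c' k = 0 /\
   \sum_k c' k *: f k = 0 /\ c' ord0 <= 0 /\ exists j, 0 < c' j.
  case: (leP (c ord0) 0) => hc.
    by exists c; do 3!split => //; apply: (pos_exists c0 ci).
  exists (fun k => - c k); split; first by rewrite sumrN c0 oppr0.
  split; first by under eq_bigr do rewrite scaleNr; rewrite sumrN cf oppr0.
  split; first by rewrite oppr_le0 ltW.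
  apply: (@pos_exists _ _ i); first by rewrite sumrN c0 oppr0.
  by rewrite oppr_eq0.
have [j1 cj1 jmin] := @arg_minP _ K _ j (fun k => 0 < c' k) (fun k => w k / c' k) cj.
set s := w j1 / c' j1.
have s0 : 0 <= s by rewrite divr_ge0 // ltW.
apply: (rem f (fun k => w k - s * c' k) _ j1).
- split => //.
  + move=> k; rewrite subr_ge0; case: (ltP 0 (c' k)) => ck.
      by rewrite -ler_pdivlMr //; apply: jmin.
    apply: le_trans (wp k); by rewrite mulr_ge0_le0.
  + rewrite subr_gt0; apply: le_lt_trans (w0); by rewrite mulr_ge0_le0.
  + by rewrite sumrB -mulr_sumr c'0 mulr0 subr0.
  + under eq_bigr do rewrite scalerBl -scalerA.
    by rewrite sumrB -scaler_sumr c'f scaler0 subr0.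
- by apply/eqP => e; move: c'neg; rewrite -e leNgt cj1.
- by rewrite /s divfK ?subrr // gt_eqF.
Qed.


Definition Mof m (g : 'I_m.+1 -> V) : 'M[K]_(m, d) :=
  \matrix_(i < m) (g (lift ord0 i) - g ord0).

Lemma Mof_mul m (g : 'I_m.+1 -> V) (b : 'rV[K]_m) :
  b *m Mof g = \sum_i b 0 i *: g (lift ord0 i) - (\sum_i b 0 i) *: g ord0.
Proof.
rewrite mulmx_sum_row /Mof.
under eq_bigr do rewrite rowK scalerBr.
by rewrite sumrB scaler_suml.
Qed.

Lemma afind_free m (g : 'I_m.+1 -> V) : afind g -> row_free (Mof g).
Proof.
move=> af; apply: inj_row_free => v vM.
have lK : forall i : 'I_m, unlift (@ord0 m) (lift ord0 i) = Some i.
  by move=> i; apply: liftK.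
pose c k := if unlift ord0 k is Some i then v 0 i else - \sum_i v 0 i.
have h : forall i : 'I_m, c (lift ord0 i) = v 0 i by move=> i; rewrite /c lK.
have h0 : c ord0 = - \sum_i v 0 i by rewrite /c unlift_none.
have cS : \sum_k c k = 0.
  by rewrite big_ord_recl h0 addrC; under eq_bigr do rewrite h; rewrite subrr.
have cG : \sum_k c k *: g k = 0.
  rewrite big_ord_recl h0 addrC; under eq_bigr do rewrite h.
  by rewrite scaleNr -Mof_mul vM.
apply/rowP => i; rewrite mxE.
by have := af c cS cG (lift ord0 i); rewrite h.
Qed.

Lemma afind_size m (g : 'I_m.+1 -> V) : afind g -> (m <= d)%N.
Proof.
move=> /afind_free rf; have := rank_leq_col (Mof g); by rewrite (eqP rf).
Qed.

Lemma afind_inj m (g : 'I_m.+1 -> V) : afind g -> injective g.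
Proof.
move=> af i j gij; apply: NNPP => ij.
pose c k : K := (k == i)%:R - (k == j)%:R.
have cS : \sum_k c k = 0.
  rewrite sumrB (bigD1 i) //= big1 => [|k /negbTE -> //].
  rewrite (bigD1 j) //= big1 => [|k /negbTE -> //].
  by rewrite !eqxx subrr.
have cG : \sum_k c k *: g k = 0.
  under eq_bigr do rewrite scalerBl.
  rewrite sumrB (bigD1 i) //= big1 => [|k /negbTE ->]; last by rewrite scale0r.
  rewrite (bigD1 j) //= big1 => [|k /negbTE ->]; last by rewrite scale0r.
  by rewrite !eqxx gij subrr.
have := af c cS cG i; rewrite /c eqxx.
have -> : (i == j) = false by apply/eqP.
by rewrite subr0 => /eqP; rewrite oner_eq0.
Qed.


Lemma comb_swap n N (l : 'I_n -> K) (a : 'I_n -> 'I_N -> K) (g : 'I_N -> V) :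
  \sum_t l t *: \sum_k a t k *: g k = \sum_k (\sum_t l t * a t k) *: g k.
Proof.
under eq_bigr do rewrite scaler_sumr.
rewrite exchange_big; apply: eq_bigr => k _; rewrite scaler_suml.
by apply: eq_bigr => t _; rewrite scalerA.
Qed.

Lemma sum_swap n N (l : 'I_n -> K) (a : 'I_n -> 'I_N -> K) :
  \sum_k \sum_t l t * a t k = \sum_t l t * \sum_k a t k.
Proof. by rewrite exchange_big; apply: eq_bigr => t _; rewrite mulr_sumr. Qed.

Lemma delta_v N (g : 'I_N -> V) k0 : \sum_k ((k0 == k)%:R : K) *: g k = g k0.
Proof.
rewrite (bigD1 k0) //= eqxx scale1r big1 ?addr0 // => k.
by rewrite eq_sym => /negbTE ->; rewrite scale0r.
Qed.

Lemma delta_s N (k0 : 'I_N) : \sum_k ((k0 == k)%:R : K) = 1.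
Proof.
rewrite (bigD1 k0) //= eqxx big1 ?addr0 // => k.
by rewrite eq_sym => /negbTE ->.
Qed.

Lemma conv_rep N (g : 'I_N -> V) (Q : V -> Prop) :
  (forall z, Q z -> exists k, z = g k) -> forall w, conv Q w ->
  exists a : 'I_N -> K, [/\ (forall k, 0 <= a k), \sum_k a k = 1 &
     w = \sum_k a k *: g k].
Proof.
move=> Qg w [n [x [l [Qx [l0 [ls wE]]]]]].
have /fin_all_exists [kk kkE] : forall t, exists k, x t = g k by move=> t; apply: Qg.
exists (fun k => \sum_t l t * (kk t == k)%:R); split.
- by move=> k; apply: sumr_ge0 => t _; rewrite mulr_ge0 ?ler0n.
- by rewrite sum_swap; under eq_bigr do rewrite delta_s mulr1.
- rewrite -comb_swap wE; apply: eq_bigr => t _; by rewrite delta_v kkE.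
Qed.

Lemma aff_conv_rep N (g : 'I_N -> V) (Q : V -> Prop) :
  (forall z, Q z -> exists k, z = g k) -> forall z, aff (conv Q) z ->
  exists a : 'I_N -> K, \sum_k a k = 1 /\ z = \sum_k a k *: g k.
Proof.
move=> Qg z [n [x [l [cx [ls zE]]]]].
have /fin_all_exists [a aP] : forall t, exists a : 'I_N -> K, [/\ (forall k, 0 <= a k),
   \sum_k a k = 1 & x t = \sum_k a k *: g k].
  by move=> t; exact: (conv_rep Qg (cx t)).
have e : forall t, \sum_k a t k = 1 by move=> t; case: (aP t).
exists (fun k => \sum_t l t * a t k); split.
- by rewrite sum_swap; under eq_bigr do rewrite e mulr1.
- rewrite -comb_swap zE; apply: eq_bigr => t _; by case: (aP t) => _ _ <-.
Qed.


Lemma supnorm_ge (v : V) j : `|v 0 j| <= supnorm v.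
Proof. by rewrite /supnorm (bigD1 j) //= le_max lexx. Qed.

Lemma supnorm_ge0 (v : V) : 0 <= supnorm v.
Proof.
rewrite /supnorm; elim/big_ind: _ => //.
by move=> a b a0 b0; rewrite le_max a0.
Qed.

Lemma supnorm_le (v : V) r : 0 <= r -> (forall j, `|v 0 j| <= r) -> supnorm v <= r.
Proof.
move=> r0 H; rewrite /supnorm; elim/big_ind: _ => //.
by move=> a b a0 b0; rewrite ge_max a0.
Qed.

Lemma col_le n p (B : 'M[K]_(n, p)) i :
  \sum_j `|B j i| <= \sum_i' \sum_j `|B j i'|.
Proof.
rewrite (bigD1 i) //= lerDl; apply: sumr_ge0 => i' _; apply: sumr_ge0 => j _.
by rewrite normr_ge0.
Qed.

Lemma relint_fam m (g : 'I_m.+1 -> V) (mu : 'I_m.+1 -> K) y (Q : V -> Prop) :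
  afind g -> (forall z, Q z -> exists k, z = g k) -> (forall k, Q (g k)) ->
  (forall k, 0 < mu k) -> \sum_k mu k = 1 -> y = \sum_k mu k *: g k ->
  relint (conv Q) y.
Proof.
move=> af Qg gQ mu0 mus yE.
split; first by exists m.+1, g, mu; split; [by [] | split; [by move=> k; apply: ltW | by split]].
have [B MB] := row_freeP (afind_free af).
set C := \sum_i \sum_j `|B j i|.
have C0 : 0 <= C.
  by apply: sumr_ge0 => i _; apply: sumr_ge0 => j _; rewrite normr_ge0.
have [k0 _ kmin] := @arg_minP _ K _ ord0 xpredT mu isT.
set D := C *+ m.+1 + 1.
have D0 : 0 < D by rewrite /D ltr_wpDl ?mulrn_wge0 ?ltr01.
exists (mu k0 / D); split; first by rewrite divr_gt0.
move=> z az sz.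
have [a [aS zE]] := aff_conv_rep Qg az.
exists m.+1, g, a; split => //; split; last by [].
set sup := supnorm (z - y).
have sup0 : 0 <= sup := supnorm_ge0 _.
set dl := fun k => a k - mu k.
have dlS : \sum_k dl k = 0 by rewrite sumrB aS mus subrr.
have dlE : z - y = \sum_k dl k *: g k.
  by rewrite zE yE -sumrB; apply: eq_bigr => k _; rewrite scalerBl.
have dl0 : dl ord0 = - \sum_i dl (lift ord0 i).
  by apply/eqP; rewrite -addr_eq0 -big_ord_recl dlS.
pose b := \row_i dl (lift ord0 i).
have bM : b *m Mof g = z - y.
  rewrite Mof_mul dlE big_ord_recl dl0.
  under eq_bigr do rewrite mxE.
  under [X in _ - X *: _]eq_bigr do rewrite mxE.
  by rewrite scaleNr addrC.
have bB : b = (z - y) *m B by rewrite -bM -mulmxA MB mulmx1.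
have X0 : 0 <= sup * C by rewrite mulr_ge0.
have blift : forall i : 'I_m, `|dl (lift ord0 i)| <= sup * C.
  move=> i; have -> : dl (lift ord0 i) = b 0 i by rewrite mxE.
  rewrite bB mxE; apply: le_trans (ler_norm_sum _ _ _) _.
  apply: le_trans (_ : \sum_j sup * `|B j i| <= _).
    apply: ler_sum => j _; rewrite normrM; apply: ler_wpM2r => //.
    exact: supnorm_ge.
  by rewrite -mulr_sumr; apply: ler_wpM2l => //; apply: col_le.
have bnd : forall k, `|dl k| <= sup * D.
  have XD : (sup * C) *+ m.+1 <= sup * D.
    by rewrite /D mulrDr mulr1 mulrnAr lerDl.
  move=> k; case: (unliftP ord0 k) => [i ->|->].
    apply: le_trans (blift i) _; apply: le_trans XD.
    by rewrite mulrS lerDl mulrn_wge0.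
  rewrite dl0 normrN; apply: le_trans (ler_norm_sum _ _ _) _.
  apply: le_trans (_ : \sum_(i < m) sup * C <= _).
    by apply: ler_sum => i _; apply: blift.
  rewrite sumr_const card_ord; apply: le_trans XD.
  by rewrite mulrS lerDr.
have sD : sup * D < mu k0 by rewrite -ltr_pdivlMr.
move=> k.
have -> : a k = mu k + dl k by rewrite /dl addrC subrK.
rewrite -(opprK (dl k)) subr_ge0.
apply: le_trans (ler_norm _) _; rewrite normrN.
apply: le_trans (bnd k) _; apply: ltW; apply: lt_le_trans sD _.
exact: kmin.
Qed.


Lemma finish (P : V -> Prop) y x m (g : 'I_m.+1 -> V) mu :
 (forall i, P (g i)) -> g ord0 = x -> afind g -> (forall i, 0 < mu i) ->
 \sum_i mu i = 1 -> y = \sum_i mu i *: g i ->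
 exists s : seq V, [/\ uniq s, (forall z, z \in s -> P z), aff_indep s,
   (size s <= d.+1)%N & (x \in s /\ relint (conv (fun z => z \in s)) y)].
Proof.
move=> Pg gx af mu0 mus yE.
pose s := mkseq (fun i => g (inord i)) m.+1.
have ss : size s = m.+1 by rewrite size_mkseq.
have sn : forall i : 'I_m.+1, s`_i = g i by move=> i; rewrite nth_mkseq // inord_val.
have memS : forall z, z \in s -> exists k, z = g k.
  move=> z /(nthP 0) [k]; rewrite ss => km <-; exists (Ordinal km).
  by have := sn (Ordinal km).
have gS : forall k, g k \in s by move=> k; rewrite -sn mem_nth // ss.
exists s; split.
- rewrite /s /mkseq map_inj_in_uniq ?iota_uniq // => i j.
  rewrite !mem_iota !add0n => /andP [_ hi] /andP [_ hj] /(afind_inj af).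
  by move/(congr1 val); rewrite /= !inordK.
- by move=> z /memS [k ->].
- rewrite /aff_indep; have ss' := ss; move: (size s) ss' => N eN; subst N.
  move=> c cS cG; apply: (af c cS).
  by rewrite -[RHS]cG; apply: eq_bigr => i _; rewrite sn.
- by rewrite ss ltnS; apply: afind_size af.
- split; first by rewrite -gx gS.
  exact: (relint_fam af memS gS mu0 mus yE).
Qed.

End S.

Unset Implicit Arguments.
Set Strict Implicit.

Theorem lemma2 (K : realFieldType) (d : nat) (R : 'rV[K]_d -> Prop)
  (y : 'rV[K]_d) (hy : relint (conv R) y) (x : 'rV[K]_d) (hx : R x) :
  exists s : seq 'rV[K]_d,
    [/\ uniq s, (forall z, z \in s -> R z), aff_indep s,
        (size s <= d.+1)%N &
        (x \in s /\ relint (conv (fun z => z \in s)) y)].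
Proof.
case: hy => yc [eps [eps0 Heps]].
set sx := supnorm (y - x).
have sx0 : 0 <= sx := supnorm_ge0 _.
have sx1 : 0 < sx + 1 by rewrite ltr_wpDl ?ltr01.
set t := eps / (sx + 1).
have t0 : 0 < t by rewrite divr_gt0.
set z := (1 + t) *: y - t *: x.
have zy : z - y = t *: (y - x).
  by rewrite /z scalerDl scale1r scalerBr addrAC [y + _]addrC addrK.
have xc : conv R x.
  exists 1%N, (fun _ => x), (fun _ => 1); split; first by [].
  split; first by move=> _; exact: ler01.
  by split; rewrite big_ord1 ?scale1r.
have zaff : aff (conv R) z.
  exists 2%N, (fun i : 'I_2 => if val i == 0%N then y else x),
    (fun i : 'I_2 => if val i == 0%N then 1 + t else - t).
  split; first by move=> i; case: ifP.
  rewrite !big_ord_recl !big_ord0 /= !addr0 addrK; split => //.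
  by rewrite scaleNr.
have zc : conv R z.
  apply: Heps => //; rewrite zy; apply: le_lt_trans (_ : t * sx < eps).
    apply: supnorm_le; first by apply: mulr_ge0 => //; apply: ltW.
    move=> j; rewrite mxE normrM gtr0_norm //; apply: ler_wpM2l; first exact: ltW.
    exact: supnorm_ge.
  have <- : t * (sx + 1) = eps by rewrite /t divfK // gt_eqF.
  by rewrite ltr_pM2l // ltrDl ltr01.
case: zc => [n2 [h [nu [hR [nu0 [nus zE]]]]]].
have lK : forall i : 'I_n2, unlift (@ord0 n2) (lift ord0 i) = Some i.
  by move=> i; apply: liftK.
pose f (k : 'I_n2.+1) := if unlift ord0 k is Some i then h i else x.
pose w (k : 'I_n2.+1) := if unlift ord0 k is Some i then nu i / (1 + t) else t / (1 + t).
have fl : forall i : 'I_n2, f (lift ord0 i) = h i by move=> i; rewrite /f lK.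
have wl : forall i : 'I_n2, w (lift ord0 i) = nu i / (1 + t) by move=> i; rewrite /w lK.
have f0 : f ord0 = x by rewrite /f unlift_none.
have w0 : w ord0 = t / (1 + t) by rewrite /w unlift_none.
have t1 : 0 < 1 + t by rewrite addr_gt0 ?ltr01.
have H : hypf R y f w.
  split.
  - by move=> k; case: (unliftP ord0 k) => [i ->|->]; rewrite ?fl ?f0.
  - move=> k; case: (unliftP ord0 k) => [i ->|->]; rewrite ?wl ?w0 divr_ge0 ?nu0 ?ltW //.
  - by rewrite w0 divr_gt0.
  - rewrite big_ord_recl w0 addrC; under eq_bigr do rewrite wl.
    by rewrite -mulr_suml nus -mulrDl divff // gt_eqF.
  - rewrite big_ord_recl f0 w0 addrC; under eq_bigr do rewrite wl fl mulrC -scalerA.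
    rewrite -scaler_sumr -zE /z scalerBr scalerA mulVf ?gt_eqF // scale1r scalerA.
    by rewrite [_^-1 * t]mulrC subrK.
have [m [g [mu [Pg g0 af mu0 [mus yE]]]]] := elim_pts H.
rewrite f0 in g0.
exact: (finish Pg g0 af mu0 mus yE).
Qed.
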